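(* Let $G$ and $H$ be trees, let $\omega:(V(G)\times V(H))\cup(E(G)\times E(H))\to\mathbb{R}\cup\{-\infty\}$ be a weight function, and let $r\in V(G)$ be arbitrary. Then $\mathrm{MCS}_{\mathrm{fast}}(G^r,H)=\mathrm{MCS}(G,H)$, where $\mathrm{MCS}_{\mathrm{fast}}(G^r,H):=\max\{\mathrm{MCS}_{\mathrm{root}}(G^r_u,H^{s})\mid u\in V(G),\ s\in V(H)\}$ and $\mathrm{MCS}(G,H):=\max\{\mathrm{MCS}_{\mathrm{root}}(G^{r'},H^{s})\mid r'\in V(G),\ s\in V(H)\}$.
   Context: All graphs are simple and undirected; a tree is a connected graph with a unique path between any two vertices. An isomorphism between graphs $A,B$ is a bijection $\phi:V(A)\to V(B)$ with $uv\in E(A)\Leftrightarrow\phi(u)\phi(v)\in E(B)$. For a tree $G$ and $r\in V(G)$, $G^r$ denotes $G$ rooted at $r$; for $u\in V(G)$, the rooted subtree $G^r_u$ is the subtree of $G$ induced by $u$ and all its descendants in $G^r$, rooted at $u$. A common subtree isomorphism between trees $A$ and $B$ is an isomorphism $\varphi$ between induced subgraphs $A[X]$ and $B[Y]$ that are trees; $\operatorname{dom}(\varphi)=X$. Its weight is $W(\varphi)=\sum_{v\in X}\omega(v,\varphi(v))+\sum_{uv\in E(A[X])}\omega(uv,\varphi(u)\varphi(v))$. For rooted trees $A^a$ and $B^b$ (here subtrees of $G$ and $H$, so $\omega$ applies), $\mathrm{MCS}_{\mathrm{root}}(A^a,B^b)$ is the maximum weight of a common subtree isomorphism $\varphi$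 between $A$ and $B$ with $a\in\operatorname{dom}(\varphi)$ and $\varphi(a)=b$. Equivalently, $\mathrm{MCS}_{\mathrm{root}}(A^a,B^b)=\omega(a,b)+W(M)$, where $M$ is a maximum weight matching (possibly empty) of the complete bipartite graph on the children $C(a)$ of $a$ and $C(b)$ of $b$ with edge weights $\omega(aa',bb')+\mathrm{MCS}_{\mathrm{root}}(A^a_{a'},B^b_{b'})$. *)

(* Defs.v *)
From HB Require Import structures.
From mathcomp Require Import all_boot all_order all_algebra.
From mathcomp Require Import boolp reals constructive_ereal.
Set Implicit Arguments. Unset Strict Implicit. Unset Printing Implicit Defensive.
Import Order.TTheory GRing.Theory Num.Theory.

Local Open Scope ereal_scope.

Section Trees.
Variable T : finType.
Variable e : rel T.

(* p is a (vertex-)simple path from u to v in the induced subgraph on X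
   (u :: p is the vertex sequence). *)
Definition upath (X : {set T}) (u v : T) (p : seq T) : bool :=
  [&& u \in X, path e u p, all (mem X) p, uniq (u :: p) & last u p == v].

Definition tree_on (X : {set T}) : Prop :=
  forall u v, u \in X -> v \in X -> exists! p, upath X u v p.

Definition is_tree : Prop :=
  symmetric e /\ irreflexive e /\ tree_on setT.

(* vertex set of the rooted subtree G^r_u: u and its descendants in G^r,
   i.e. the vertices v whose path from r passes through u *)
Definition desc (r u : T) : {set T} :=
  [set v | `[< exists p, upath setT r v p /\ u \in r :: p >]].

Definition edges_on (X : {set T}) : {set {set T}} :=
  [set A : {set T} | [exists u, exists v,
     [&& u \in X, v \in X, e u v & A == [set u; v]]]].
End Trees.

(* Common subtree isomorphism phi between G[SA] and H[SB], with dom phi = X,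
   mapping a to b. *)
Definition rooted_csi (TG TH : finType) (eG : rel TG) (eH : rel TH)
  (SA : {set TG}) (SB : {set TH}) (a : TG) (b : TH)
  (X : {set TG}) (phi : {ffun TG -> TH}) : Prop :=
  [/\ X \subset SA, phi @: X \subset SB, tree_on eG X, tree_on eH (phi @: X)
    & [/\ {in X &, injective phi},
       (forall u v, u \in X -> v \in X -> eG u v = eH (phi u) (phi v)),
       a \in X & phi a = b]].

Definition csi_weight (R : realDomainType) (TG TH : finType) (eG : rel TG)
  (wV : TG -> TH -> \bar R) (wE : {set TG} -> {set TH} -> \bar R)
  (X : {set TG}) (phi : {ffun TG -> TH}) : \bar R :=
  (\sum_(v in X) wV v (phi v)) + (\sum_(A in edges_on eG X) wE A (phi @: A)).

Definition MCS_root (R : realDomainType) (TG TH : finType) (eG : rel TG) (eH : rel TH)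
  (wV : TG -> TH -> \bar R) (wE : {set TG} -> {set TH} -> \bar R)
  (SA : {set TG}) (a : TG) (SB : {set TH}) (b : TH) : \bar R :=
  \big[maxe/-oo]_(p : {set TG} * {ffun TG -> TH} |
                   `[< rooted_csi eG eH SA SB a b p.1 p.2 >])
     csi_weight eG wV wE p.1 p.2.

Definition MCS_fast (R : realDomainType) (TG TH : finType) (eG : rel TG) (eH : rel TH)
  (wV : TG -> TH -> \bar R) (wE : {set TG} -> {set TH} -> \bar R) (r : TG) : \bar R :=
  \big[maxe/-oo]_(u : TG) \big[maxe/-oo]_(s : TH)
     MCS_root eG eH wV wE (desc eG r u) u setT s.

Definition MCS (R : realDomainType) (TG TH : finType) (eG : rel TG) (eH : rel TH)
  (wV : TG -> TH -> \bar R) (wE : {set TG} -> {set TH} -> \bar R) : \bar R :=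
  \big[maxe/-oo]_(r' : TG) \big[maxe/-oo]_(s : TH)
     MCS_root eG eH wV wE setT r' setT s.

(* Main.v *)
Require Import Defs.
From HB Require Import structures.
From mathcomp Require Import all_boot all_order all_algebra.
From mathcomp Require Import boolp reals constructive_ereal.
Import Order.TTheory.
Local Open Scope ereal_scope.

Section Aux.
Variable T : finType.
Variable e : rel T.

Lemma first_in (X : {set T}) (r : T) (p : seq T) :
  path e r p -> uniq (r :: p) -> last r p \in X ->
  exists q, [/\ path e r q, uniq (r :: q), last r q \in X,
     {subset (r :: q) <= (r :: p)} &
     forall z, z \in r :: q -> z \in X -> z = last r q].
Proof.
elim: p r => [|y p IH] r /=.
  move=> _ _ rX; exists [::]; split=> //=; move=> z; rewrite inE => /eqP -> //.
case/andP=> ery pyp /andP [ryp uyp] lX.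
case rX: (r \in X).
  exists [::]; split=> //=; move=> z; rewrite inE => /eqP -> //; exact: mem_head.

have [q [pq uq lq sq fq]] := IH y pyp uyp lX.
exists (y :: q); split=> //=.
- by rewrite ery.
- apply/andP; split=> //; apply/negP => /sq; by rewrite (negbTE ryp).
- move=> z; rewrite inE => /orP [/eqP ->|zq]; first exact: mem_head.
  by rewrite inE (sq z zq) orbT.
- move=> z; rewrite inE => /orP [/eqP ->|zq]; first by rewrite rX.
  exact: fq.
Qed.

Lemma key (r : T) (X : {set T}) (x0 : T) :
  is_tree e -> tree_on e X -> x0 \in X ->
  exists2 w, w \in X & X \subset desc e r w.
Proof.
move=> [_ [_ tT]] tX x0X.
have [p0 [/and5P [_ pp0 _ up0 /eqP lp0] _]] := tT r x0 (in_setT _) (in_setT _).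
have lx : last r p0 \in X by rewrite lp0.
have [q [pq uq lq _ fq]] := @first_in X r p0 pp0 up0 lx.
exists (last r q) => //.
apply/subsetP => v vX.
have [pv [/and5P [_ ppv apv upv /eqP lpv] _]] := tX _ _ lq vX.
rewrite /desc inE; apply/asboolP; exists (q ++ pv); split.
  apply/and5P; split=> //.
  - by rewrite cat_path pq ppv.
  - by apply/allP => ? _; rewrite /= in_setT.
  - rewrite -[r :: q ++ pv]/((r :: q) ++ pv) cat_uniq uq /=; move: upv => /= /andP [lpv' ->].
    rewrite andbT; apply/hasPn => y ypv; apply/negP => yq.
    have yX : y \in X by move/allP: apv; apply.
    by move: (fq y yq yX) lpv' => <-; rewrite ypv.
  - by rewrite last_cat lpv.
by rewrite -[r :: q ++ pv]/((r :: q) ++ pv) mem_cat mem_last.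
Qed.
End Aux.
#[local] Hint Resolve leNye : core.

Theorem lemma2 (R : realType) (TG TH : finType) (eG : rel TG) (eH : rel TH)
  (wV : TG -> TH -> \bar R) (wE : {set TG} -> {set TH} -> \bar R) (r : TG) :
  is_tree eG -> is_tree eH ->
  (forall v x, wV v x != +oo) ->
  (forall A B, A \in edges_on eG setT -> B \in edges_on eH setT -> wE A B != +oo) ->
  MCS_fast eG eH wV wE r = MCS eG eH wV wE.
Proof.
move=> tG tH _ _; apply/le_anti/andP; split.
- apply: bigmax_le => [|u]; first exact: leNye; move=> _; apply: bigmax_le => [|s]; first exact: leNye; move=> _.
  apply: le_trans (le_bigmax _ _ u); apply: le_trans (le_bigmax _ _ s).
  apply: bigmax_le => [|p]; first exact: leNye; move=> /asboolP [sX sY tX tY [inj ed aX pa]].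
  apply: (bigmax_sup p) => //; apply/asboolP; split=> //.
- apply: bigmax_le => [|u]; first exact: leNye; move=> _; apply: bigmax_le => [|s]; first exact: leNye; move=> _.
  apply: bigmax_le => [|p]; first exact: leNye; move=> /asboolP [sX sY tX tY [inj ed aX pa]].
  have [w wX Xd] := @key _ eG r _ _ tG tX aX.
  apply: le_trans (le_bigmax _ _ w); apply: le_trans (le_bigmax _ _ (p.2 w)).
  apply: (bigmax_sup p) => //; apply/asboolP; split=> //.
Qed.
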